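(* Let $q=p^e>2$ with $p$ prime, let $r\ge2$, $m=2r$, $D=\{x\in\mathbb{F}_{q^m}:\mathrm{Tr}_{q^r/q}(x^{q^r+1})=0\}=\{d_1,\dots,d_n\}$, and $\overline{\mathcal{C}_D}=\{(\mathrm{Tr}_{q^m/q}(bx)+c)_{x\in D}:b\in\mathbb{F}_{q^m},c\in\mathbb{F}_q\}$. Let $\alpha$ generate $\mathbb{F}_{q^m}^*$ and let $G_1$ be the generator matrix of $\overline{\mathcal{C}_D}$ whose first row is $(1,\dots,1)$, second row $(\mathrm{Tr}_{q^m/q}(d_j))_j$, third row $(\mathrm{Tr}_{q^m/q}(\alpha d_j)+1)_j$, and $(i+2)$-th row $(\mathrm{Tr}_{q^m/q}(\alpha^i d_j))_j$ for $2\le i\le m-1$. Let $\overline{\mathcal{C}_D}'$ be the code generated by $[I_{m+1}:G_1]$. Then $\overline{\mathcal{C}_D}$ is a self-orthogonal code which is almost optimally or optimally extendable, i.e. $0\le d(\overline{\mathcal{C}_D}^{\perp})-d(\overline{\mathcal{C}_D}'^{\perp})\le 1$.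
   Context: $d(\cdot)$ denotes minimum distance. For a linear code $\mathcal{C}$ with $k\times n$ generator matrix $G$, let $\mathcal{C}'$ be the code generated by $[I_k:G]$; $\mathcal{C}$ is optimally extendable if $d(\mathcal{C}'^{\perp})=d(\mathcal{C}^{\perp})$ and almost optimally extendable if $d(\mathcal{C}'^{\perp})=d(\mathcal{C}^{\perp})-1$. Self-orthogonal means $\mathcal{C}\subseteq\mathcal{C}^\perp$. *)

(* Defs.v *)
From HB Require Import structures.
From mathcomp Require Import all_boot all_order all_algebra.
Set Implicit Arguments. Unset Strict Implicit. Unset Printing Implicit Defensive.
Import GRing.Theory.
Local Open Scope ring_scope.

Definition trq (L : finFieldType) (q k : nat) (x : L) : L :=
  \sum_(i < k) x ^+ (q ^ i)%N.

Definition Dset (L : finFieldType) (q r : nat) : {set L} :=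
  [set x : L | trq q r (x ^+ (q ^ r + 1)%N) == 0].

Definition dpt (L : finFieldType) (q r : nat) (j : 'I_#|Dset L q r|) : L :=
  enum_val j.

Definition rowspace (F : fieldType) (k N : nat) (A : 'M[F]_(k, N))
  : pred 'rV[F]_N := fun v => (v <= A)%MS.

Definition dual (F : finFieldType) (N : nat) (C : {set 'rV[F]_N})
  : {set 'rV[F]_N} :=
  [set u | [forall v in C, u *m v^T == 0]].

Definition wt (F : fieldType) (N : nat) (v : 'rV[F]_N) : nat :=
  #|[set j : 'I_N | v 0 j != 0]|.

(* minimum distance: least weight of a nonzero codeword (N if none) *)
Definition dmin (F : finFieldType) (N : nat) (C : {set 'rV[F]_N}) : nat :=
  \big[minn/N]_(v in C | v != 0) wt v.

Definition self_orthogonal (F : finFieldType) (N : nat) (C : {set 'rV[F]_N}) :=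
  C \subset dual C.

Definition ext_code (F : finFieldType) (k N : nat) (G : 'M[F]_(k, N))
  : {set 'rV[F]_(k + N)} :=
  [set v | rowspace (row_mx 1%:M G) v].

Definition optimally_extendable (F : finFieldType) (k N : nat)
  (C : {set 'rV[F]_N}) (G : 'M[F]_(k, N)) :=
  dmin (dual (ext_code G)) = dmin (dual C).

Definition almost_optimally_extendable (F : finFieldType) (k N : nat)
  (C : {set 'rV[F]_N}) (G : 'M[F]_(k, N)) :=
  (dmin (dual (ext_code G)) + 1)%N = dmin (dual C).

(* the augmented trace code  { (Tr_{q^m/q}(b x) + c)_{x in D} : b in F_{q^m}, c in F_q },
   with F_q embedded in F_{q^m} by iota *)
Definition CDbar (F L : finFieldType) (iota : F -> L) (q r : nat)
  : {set 'rV[F]_#|Dset L q r|} :=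
  [set v : 'rV[F]_#|Dset L q r| | [exists b : L, exists c : F,
     [forall j, iota (v 0 j) == trq q (2 * r) (b * dpt j) + iota c]]].

Definition G1entry (L : finFieldType) (q r : nat) (alpha : L)
  (i : 'I_(2 * r).+1) (j : 'I_#|Dset L q r|) : L :=
  if i == 0 :> nat then 1
  else if i == 1 :> nat then trq q (2 * r) (dpt j)
  else if i == 2 :> nat then trq q (2 * r) (alpha * dpt j) + 1
  else trq q (2 * r) (alpha ^+ (i.-1) * dpt j).
Arguments G1entry {L} q r alpha i j.

(* Main.v *)
Require Import Defs.
From HB Require Import structures.
From mathcomp Require Import all_boot all_order all_algebra.
From mathcomp Require Import finfield.
From mathcomp Require Import zify ring.
Import GRing.Theory.
Set Implicit Arguments. Unset Strict Implicit. Unset Printing Implicit Defensive.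

Lemma geom_nat (q j : nat) : (0 < q)%N ->
  ((q - 1) * \sum_(i < j) q ^ i)%N = (q ^ j - 1)%N.
Proof.
move=> q0; elim: j => [|j IH]; first by rewrite big_ord0 muln0 expn0.
rewrite big_ord_recr /= mulnDr IH expnS.
have h1 : (1 <= q ^ j)%N by rewrite expn_gt0 q0.
nia.
Qed.

Lemma coprime_q_qr1 (q r : nat) : (0 < r)%N -> coprime (q ^ r + 1) q.
Proof.
move=> r0; rewrite -coprime_modl.
case: q => [|[|q]]; [by rewrite exp0n // | by rewrite coprimen1 |].
by rewrite -(prednK r0) expnS mulnC modnMDl modn_small // coprime1n.
Qed.

Lemma nt_pow (q r k : nat) : (2 < q)%N -> (0 < r)%N ->
  ~~ ((q - 1) * (q ^ r + 1) %| q ^ k)%N.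
Proof.
move=> q2 r0; apply/negP => H.
have H1 : (q ^ r + 1 %| q ^ k)%N := dvdn_trans (dvdn_mull _ (dvdnn _)) H.
have hc : coprime (q ^ r + 1) (q ^ k).
  case: k H H1 => [|k] H H1; first by rewrite expn0 coprimen1.
  by rewrite coprime_pexpr // coprime_q_qr1.
move: H1; rewrite -(muln1 (q ^ k)) Gauss_dvdr // => /dvdn_leq.
have : (0 < q ^ r)%N by rewrite expn_gt0; lia.
lia.
Qed.

Lemma nt_sum (q r k l : nat) : (2 < q)%N -> (0 < r)%N -> (k < 2 * r)%N -> (l < 2 * r)%N ->
  ~~ ((q - 1) * (q ^ r + 1) %| q ^ k + q ^ l)%N.
Proof.
move=> q2 r0.
wlog lk : k l / (l <= k)%N.
  move=> W kr lr; case: (leqP l k) => h; first exact: (W k l).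
  by rewrite [(q ^ k + _)%N]addnC; apply: (W l k) => //; exact: ltnW.
move=> kr lr; apply/negP => H.
have jr : (k - l < 2 * r)%N by clear -kr; lia.
have ek : (q ^ k + q ^ l = q ^ l * (q ^ (k - l) + 1))%N.
  by rewrite mulnDr muln1 -expnD subnKC.
move: (k - l)%N jr ek => j jr ek.
have hc : coprime ((q - 1) * (q ^ r + 1)) (q ^ l).
  case: l {lk lr ek H} => [|l]; first by rewrite expn0 coprimen1.
  rewrite coprime_pexpr // coprimeMl coprime_q_qr1 // andbT.
  have -> : (q - 1 = q.-1)%N by clear -q2; lia.
  by apply: coprimePn; clear -q2; lia.
move: H; rewrite ek Gauss_dvdr // => H.
have Hq1 : (q - 1 %| 2)%N.
  have H2 : (q - 1 %| q ^ j + 1)%N := dvdn_trans (dvdn_mulr _ (dvdnn _)) H.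
  have H3 : (q - 1 %| q ^ j - 1)%N.
    by rewrite -geom_nat ?dvdn_mulr //; clear -q2; lia.
  have hj : (1 <= q ^ j)%N by rewrite expn_gt0; clear -q2; lia.
  have -> : (2 = (q ^ j + 1) - (q ^ j - 1))%N.
    by move: (q ^ j) hj => X; clear; lia.
  exact: dvdn_sub.
have q3 : q = 3%N.
  have := dvdn_leq (isT : (0 < 2)%N) Hq1; clear -q2; lia.
move: H; rewrite q3 => H.
have H1 : (3 ^ r + 1 %| 3 ^ j + 1)%N := dvdn_trans (dvdn_mull _ (dvdnn _)) H.
have p3r : (0 < 3 ^ r)%N by rewrite expn_gt0.
case: (ltngtP j r) => hjr.
- have hp : (0 < 3 ^ j + 1)%N by rewrite addn1.
  have := dvdn_leq hp H1.
  have : (3 ^ j < 3 ^ r)%N by rewrite ltn_exp2l.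
  move: (3 ^ j)%N (3 ^ r)%N => X Y; clear; lia.
- have et : (3 ^ j = 3 ^ (j - r) * 3 ^ r)%N by rewrite -expnD subnK // ltnW.
  have tr : (j - r < r)%N by clear -jr; lia.
  have t0 : (0 < j - r)%N by clear -hjr; lia.
  move: (j - r)%N et tr t0 => t et tr t0.
  have H4 : (3 ^ r + 1 %| 3 ^ t * (3 ^ r + 1))%N by apply: dvdn_mull.
  have H5 : (3 ^ r + 1 %| 3 ^ t * (3 ^ r + 1) - (3 ^ j + 1))%N by apply: dvdn_sub.
  have h1 : (1 < 3 ^ t)%N by rewrite -{1}(expn0 3) ltn_exp2l.
  have h2 : (3 ^ t < 3 ^ r)%N by rewrite ltn_exp2l.
  have e5 : (3 ^ t * (3 ^ r + 1) - (3 ^ j + 1) = 3 ^ t - 1)%N.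
    rewrite et; move: (3 ^ t)%N (3 ^ r)%N h1 => X Y _; clear; nia.
  rewrite e5 in H5.
  have hp : (0 < 3 ^ t - 1)%N by move: (3 ^ t)%N h1 => X; clear; lia.
  have := dvdn_leq hp H5.
  move: (3 ^ t)%N (3 ^ r)%N h2 => X Y; clear; lia.
- move: H; rewrite hjr => H.
  have hp : (0 < 3 ^ r + 1)%N by rewrite addn1.
  have := dvdn_leq hp H; move: (3 ^ r)%N p3r => X; clear; lia.
Qed.

Local Open Scope ring_scope.

Lemma pow_q_fix (L : finFieldType) (q : nat) (c : L) :
  c ^+ q = c -> forall i, c ^+ (q ^ i)%N = c.
Proof.
move=> hc; elim=> [|i IH]; first by rewrite expn0 expr1.
by rewrite expnS mulnC exprM IH hc.
Qed.

Lemma trq_scale (L : finFieldType) (q k : nat) (c y : L) :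
  c ^+ q = c -> trq q k (c * y) = c * trq q k y.
Proof.
move=> hc; rewrite /trq mulr_sumr; apply: eq_bigr => i _.
by rewrite exprMn (pow_q_fix hc).
Qed.

Lemma trq0 (L : finFieldType) (q k : nat) : (0 < q)%N -> trq q k (0 : L) = 0.
Proof.
move=> q0; rewrite /trq big1 // => i _; rewrite expr0n.
have : (q ^ i != 0)%N by rewrite expn_eq0 negb_and -lt0n q0.
by case: (q ^ i)%N.
Qed.

Lemma unit_pow (L : finFieldType) (alpha : L) : alpha != 0 -> alpha ^+ #|L|.-1 = 1.
Proof.
move=> a0; apply: (mulIf a0); rewrite mul1r -exprSr prednK ?expf_card //.
by apply/card_gt0P; exists 0.
Qed.

Lemma pow_modE (L : finFieldType) (alpha : L) (n0 N : nat) :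
  alpha ^+ n0 = 1 -> alpha ^+ N = alpha ^+ (N %% n0).
Proof.
move=> h; rewrite {1}(divn_eq N n0) exprD mulnC exprM h expr1n mul1r //.
Qed.

Lemma alpha_dvd (L : finFieldType) (alpha : L) (N : nat) :
  alpha != 0 -> (forall x : L, x != 0 -> exists k : nat, x = alpha ^+ k) ->
  alpha ^+ N = 1 -> (#|L|.-1 %| N)%N.
Proof.
move=> a0 gen hN.
set n0 := #|L|.-1.
have h0 := unit_pow a0.
have hb : alpha ^+ (N %% n0) = 1 by rewrite -(pow_modE _ h0).
have n0pos : (0 < n0)%N.
  by rewrite /n0 -(cardsC1 (0 : L)); apply/card_gt0P; exists alpha; rewrite !inE.
rewrite /dvdn; apply/eqP; apply/eqP/negPn/negP => bn0.
set b := (N %% n0)%N in hb bn0.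
have blt : (b < n0)%N by rewrite ltn_pmod.
have sub : [set~ (0 : L)] \subset [set alpha ^+ (nat_of_ord k) | k : 'I_b].
  apply/subsetP => x; rewrite !inE => /gen [k ->].
  apply/imsetP.
  have bpos : (0 < b)%N by rewrite lt0n.
  exists (Ordinal (ltn_pmod k bpos)) => //=.
  exact: pow_modE.
have := subset_leq_card sub; rewrite cardsC1 -/n0 => h2.
have := leq_trans h2 (leq_imset_card _ _).
by rewrite card_ord leqNgt blt.
Qed.

Lemma sum_pow_zero (L : finFieldType) (A : {set L}) (h : L) (n : nat) :
  h != 0 -> (forall x, (h * x \in A) = (x \in A)) -> h ^+ n != 1 ->
  \sum_(x in A) x ^+ n = 0.
Proof.
move=> h0 hA hn.
have e : \sum_(x in A) x ^+ n = h ^+ n * \sum_(x in A) x ^+ n.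
  have e1 : \sum_(x in A) x ^+ n = \sum_(x in A) (h * x) ^+ n.
    rewrite (reindex_inj (mulfI h0)) /=.
    by apply: eq_bigl => x; rewrite hA.
  by rewrite {1}e1 mulr_sumr; apply: eq_bigr => x _; rewrite exprMn.
apply/eqP; move: e => /eqP; rewrite -subr_eq0 -{1}(mul1r (\sum_(x in A) _)) -mulrBl.
rewrite mulf_eq0 subr_eq0 eq_sym (negbTE hn) //.
Qed.


Lemma frobL (L : finFieldType) (q r : nat) (x : L) :
  #|L| = (q ^ (2 * r))%N -> x ^+ (q ^ r * q ^ r)%N = x.
Proof. by move=> HL; rewrite -expnD addnn -mul2n -HL expf_card. Qed.

Lemma Q_scale (L : finFieldType) (q r : nat) (h c x : L) :
  h ^+ (q ^ r + 1)%N = c -> c ^+ q = c ->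
  trq q r ((h * x) ^+ (q ^ r + 1)%N) = c * trq q r (x ^+ (q ^ r + 1)%N).
Proof. by move=> hc cq; rewrite exprMn hc trq_scale. Qed.

Lemma expn_sub1_mul (q r : nat) : (0 < q)%N ->
  (q ^ (2 * r) - 1 = (q ^ r - 1) * (q ^ r + 1))%N.
Proof.
move=> q0; have h : (1 <= q ^ r)%N by rewrite expn_gt0 q0.
rewrite mul2n -addnn expnD; move: (q ^ r)%N h => X h; nia.
Qed.

Lemma g_props (L : finFieldType) (q r : nat) (alpha : L) :
  (2 < q)%N -> (0 < r)%N -> #|L| = (q ^ (2 * r))%N ->
  alpha != 0 -> (forall x : L, x != 0 -> exists k : nat, x = alpha ^+ k) ->
  let M := (\sum_(i < r) q ^ i)%N in
  let g := alpha ^+ M in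
  [/\ g != 0, (g ^+ (q ^ r + 1)%N) ^+ q = g ^+ (q ^ r + 1)%N,
      g ^+ (q ^ r + 1)%N != 0 &
      forall n, g ^+ n = 1 -> ((q - 1) * (q ^ r + 1) %| n)%N].
Proof.
move=> q2 r0 HL a0 gen M g.
have q0 : (0 < q)%N by lia.
have hM : ((q - 1) * M = q ^ r - 1)%N by rewrite geom_nat.
have Mpos : (0 < M)%N.
  rewrite /M -(prednK r0) big_ord_recl expn0; lia.
have Lm1 : (#|L|.-1 = M * ((q - 1) * (q ^ r + 1)))%N.
  by rewrite HL -subn1 expn_sub1_mul // -hM [RHS]mulnCA mulnA.
have g0 : g != 0 by rewrite expf_neq0.
split.
- exact: g0.
- rewrite -exprM.
  have -> : ((q ^ r + 1) * q = (q ^ r + 1) + (q ^ r + 1) * (q - 1))%N.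
    by rewrite -[X in (_ = X + _)%N]muln1 -mulnDr; congr (_ * _)%N; lia.
  rewrite exprD.
  have -> : g ^+ ((q ^ r + 1) * (q - 1))%N = 1.
    by rewrite /g -exprM [((q ^ r + 1) * _)%N]mulnC -Lm1 unit_pow.
  by rewrite mulr1.
- by rewrite expf_neq0.
- move=> n gn; have := alpha_dvd a0 gen (_ : alpha ^+ (M * n)%N = 1).
  rewrite Lm1 dvdn_pmul2l //; apply; by rewrite exprM.
Qed.

Lemma S_D (L : finFieldType) (q r : nat) (alpha : L) (n : nat) :
  (2 < q)%N -> (0 < r)%N -> #|L| = (q ^ (2 * r))%N ->
  alpha != 0 -> (forall x : L, x != 0 -> exists k : nat, x = alpha ^+ k) ->
  ~~ ((q - 1) * (q ^ r + 1) %| n)%N ->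
  \sum_(x in Dset L q r) x ^+ n = 0.
Proof.
move=> q2 r0 HL a0 gen nd.
have [g0 gq c0 gdiv] := g_props q2 r0 HL a0 gen.
apply: (sum_pow_zero g0).
- by move=> x; rewrite !inE (Q_scale _ (erefl _) gq) mulf_eq0 (negbTE c0).
- by apply/negP => /eqP /gdiv; apply/negP.
Qed.

Lemma sum_tr1 (L : finFieldType) (q r : nat) (alpha b : L) :
  (2 < q)%N -> (0 < r)%N -> #|L| = (q ^ (2 * r))%N ->
  alpha != 0 -> (forall x : L, x != 0 -> exists k : nat, x = alpha ^+ k) ->
  \sum_(x in Dset L q r) trq q (2 * r) (b * x) = 0.
Proof.
move=> q2 r0 HL a0 gen.
rewrite /trq exchange_big /=; apply: big1 => k _.
under eq_bigr => x _ do rewrite exprMn.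
by rewrite -mulr_sumr (@S_D _ q r alpha) ?mulr0 // nt_pow.
Qed.

Lemma sum_tr2 (L : finFieldType) (q r : nat) (alpha b b' : L) :
  (2 < q)%N -> (0 < r)%N -> #|L| = (q ^ (2 * r))%N ->
  alpha != 0 -> (forall x : L, x != 0 -> exists k : nat, x = alpha ^+ k) ->
  \sum_(x in Dset L q r) trq q (2 * r) (b * x) * trq q (2 * r) (b' * x) = 0.
Proof.
move=> q2 r0 HL a0 gen.
have e : forall x, trq q (2 * r) (b * x) * trq q (2 * r) (b' * x) =
   \sum_(k < 2 * r) \sum_(l < 2 * r)
      (b ^+ (q ^ k) * b' ^+ (q ^ l)) * x ^+ (q ^ k + q ^ l)%N.
  move=> x; rewrite /trq mulr_suml; apply: eq_bigr => k _.
  rewrite mulr_sumr; apply: eq_bigr => l _.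
  by rewrite !exprMn exprD mulrACA.
under eq_bigr => x _ do rewrite e.
rewrite exchange_big /=; apply: big1 => k _.
rewrite exchange_big /=; apply: big1 => l _.
by rewrite -mulr_sumr (@S_D _ q r alpha) ?mulr0 // nt_sum.
Qed.

Lemma frobD (L : finFieldType) (p e : nat) (x y : L) : p \in [char L] ->
  (x + y) ^+ (p ^ e)%N = x ^+ (p ^ e)%N + y ^+ (p ^ e)%N.
Proof.
move=> ch; elim: e => [|e IH]; first by rewrite !expn0 !expr1.
rewrite expnSr !exprM IH.
have := pFrobenius_autD_comm ch (mulrC (x ^+ (p ^ e)%N) (y ^+ (p ^ e)%N)).
by rewrite !pFrobenius_autE.
Qed.

Lemma frob_sum (L : finFieldType) (p e k : nat) (F : nat -> L) : p \in [char L] ->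
  (\sum_(i < k) F i) ^+ (p ^ e)%N = \sum_(i < k) F i ^+ (p ^ e)%N.
Proof.
move=> ch; have pe : (p ^ e)%N != 0%N.
  by rewrite expn_eq0 negb_and -lt0n prime_gt0 // (pcharf_prime ch).
elim: k => [|k IH]; first by rewrite !big_ord0 expr0n (negbTE pe).
by rewrite !big_ord_recr /= frobD // IH.
Qed.

Lemma shift_sum (L : finFieldType) (r : nat) (z : nat -> L) :
  z r = z 0%N -> \sum_(i < r) z i.+1 = \sum_(i < r) z i.
Proof.
move=> hz; apply: (@addrI _ (z 0%N)).
have h1 := @big_nat_recl L 0 +%R r 0 z (leq0n r).
have h2 := @big_nat_recr L 0 +%R r 0 z (leq0n r).
rewrite !big_mkord in h1 h2.
by rewrite -h1 h2 hz addrC.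
Qed.

Lemma Qfix (L : finFieldType) (p e q r : nat) (x : L) :
  p \in [char L] -> q = (p ^ e)%N -> #|L| = (q ^ (2 * r))%N ->
  trq q r (x ^+ (q ^ r + 1)%N) ^+ q = trq q r (x ^+ (q ^ r + 1)%N).
Proof.
move=> ch hq HL.
rewrite /trq.
have := frob_sum e r (fun i => x ^+ (q ^ r + 1)%N ^+ (q ^ i)%N) ch; rewrite -hq => ->.
have -> : \sum_(i < r) x ^+ (q ^ r + 1) ^+ (q ^ i) ^+ q =
          \sum_(i < r) x ^+ (q ^ r + 1) ^+ (q ^ i.+1).
  by apply: eq_bigr => i _; rewrite -exprM expnSr.
rewrite (@shift_sum L r (fun i : nat => x ^+ (q ^ r + 1)%N ^+ (q ^ i)%N)) //=.
rewrite expn0 expr1 -exprM mulnDl mul1n exprD frobL //. by rewrite addn1 exprS.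
Qed.

Lemma sum_pow_all (L : finFieldType) (alpha : L) (n : nat) :
  alpha != 0 -> alpha ^+ n != 1 -> \sum_(x : L) x ^+ n = 0.
Proof.
move=> a0 an.
rewrite (eq_bigl (fun x => x \in [set: L])); last by move=> x; rewrite in_setT.
apply: (sum_pow_zero a0) => // x; by rewrite !in_setT.
Qed.

Lemma card_D (L : finFieldType) (p e q r : nat) (alpha : L) :
  p \in [char L] -> q = (p ^ e)%N -> (2 < q)%N -> (2 <= r)%N ->
  #|L| = (q ^ (2 * r))%N ->
  alpha != 0 -> (forall x : L, x != 0 -> exists k : nat, x = alpha ^+ k) ->
  (#|Dset L q r|)%:R = 0 :> L.
Proof.
move=> ch hq q2 r2 HL a0 gen.
have q0 : (0 < q)%N by lia.
set Qf := fun x : L => trq q r (x ^+ (q ^ r + 1)%N).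
have e1 : (#|Dset L q r|)%:R = \sum_(x : L) (1 - Qf x ^+ (q - 1)) :> L.
  rewrite -sumr_const big_mkcond /=; apply: eq_bigr => x _.
  rewrite inE /Qf /=; case: eqP => [->|nz].
    rewrite expr0n; have -> : (q - 1 == 0)%N = false by lia.
    by rewrite subr0.
  have := Qfix x ch hq HL.
  set y := trq q r _ in nz *.
  have -> : q = (q - 1).+1 by lia.
  rewrite exprS => E; have E1 : y * y ^+ (q - 1) = y * 1 by rewrite mulr1.
  have := mulfI (introN eqP nz) E1.
  by rewrite subSS subn0 => ->; rewrite subrr.
rewrite e1 sumrB.
have -> : \sum_(x : L) (1 : L) = 0.
  rewrite sumr_const -/(_%:R) HL hq -expnM natrX (pcharf0 ch) expr0n.
  have -> : (e * (2 * r) == 0)%N = false.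
    have : e != 0%N by apply/negP => /eqP e0; move: q2; rewrite hq e0 expn0.
    lia.
  by [].
rewrite sub0r; apply/eqP; rewrite oppr_eq0; apply/eqP.
set P : {poly L} := \sum_(i < r) 'X^(q ^ i).
have hP : forall y, P.[y] = trq q r y.
  by move=> y; rewrite horner_sum; apply: eq_bigr => i _; rewrite hornerXn.
have sP : (size P <= (q ^ r.-1).+1)%N.
  apply: leq_trans (size_sum _ _ _) _.
  apply/bigmax_leqP => i _; rewrite size_polyXn ltnS leq_pexp2l //.
  by have := ltn_ord i; lia.
set Pn := P ^+ (q - 1).
have sPn : (size Pn <= q ^ r - 1)%N.
  have := size_exp P (q - 1); rewrite -/Pn => h.
  have hr : (q ^ r = q * q ^ r.-1)%N by rewrite -expnS prednK //; lia.
  have hX : (q <= q ^ r.-1)%N.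
    by rewrite -{1}(expn1 q) leq_pexp2l //; lia.
  have : ((size P).-1 * (q - 1) <= q ^ r.-1 * (q - 1))%N.
    by apply: leq_mul => //; lia.
  rewrite hr; move: (size Pn) (size P) (q ^ r.-1)%N h sP hX => a b X h1 h2 h3 h4.
  nia.
have e2 : forall x : L, Qf x ^+ (q - 1) =
    \sum_(s < q ^ r - 1) Pn`_s * x ^+ ((q ^ r + 1) * s)%N.
  move=> x; rewrite /Qf /= -hP -horner_exp (horner_coef_wide _ sPn).
  by apply: eq_bigr => s _; rewrite exprM.
under eq_bigr => x _ do rewrite e2.
rewrite exchange_big /=; apply: big1 => s _.
rewrite -mulr_sumr.
case: (posnP s) => [s0|spos].
  have -> : Pn`_s = 0.
    rewrite s0 -horner_coef0 /Pn horner_exp hP trq0 // expr0n.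
    by have -> : (q - 1 == 0)%N = false by lia.
  by rewrite mul0r.
rewrite (sum_pow_all a0) ?mulr0 //.
apply/negP => /eqP /(alpha_dvd a0 gen).
rewrite HL -subn1 expn_sub1_mul // [((q ^ r + 1) * _)%N]mulnC dvdn_pmul2r ?addn1 // => /(dvdn_leq spos).
by rewrite leqNgt ltn_ord.
Qed.


Lemma bigminn_le (I : eqType) (s : seq I) (P : pred I) (F : I -> nat) x j :
  j \in s -> P j -> (\big[minn/x]_(i <- s | P i) F i <= F j)%N.
Proof.
elim: s => [//|a s IH]; rewrite inE big_cons => /orP [/eqP <- | js] Pj.
  by rewrite Pj geq_minl.
case: (P a); last exact: IH.
exact: leq_trans (geq_minr _ _) (IH js Pj).
Qed.

Lemma dmin_le (F : finFieldType) (N : nat) (C : {set 'rV[F]_N}) v :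
  v \in C -> v != 0 -> (dmin C <= wt v)%N.
Proof.
move=> vC v0; rewrite /dmin; apply: bigminn_le; first by rewrite mem_index_enum.
by rewrite vC v0.
Qed.

Lemma dmin_ge (F : finFieldType) (N : nat) (C : {set 'rV[F]_N}) m :
  (forall v, v \in C -> v != 0 -> (m <= wt v)%N) -> (m <= N)%N -> (m <= dmin C)%N.
Proof.
move=> h mN; rewrite /dmin; apply: (big_ind (fun x => m <= x)%N) => //.
- by move=> x y hx hy; rewrite leq_min hx hy.
- by move=> v /andP [vC v0]; apply: h.
Qed.

Lemma wt_le (F : fieldType) (N : nat) (v : 'rV[F]_N) : (wt v <= N)%N.
Proof. by have := max_card [set j | v 0 j != 0]; rewrite card_ord. Qed.

Lemma wt_two (F : fieldType) (N : nat) (v : 'rV[F]_N) i0 i1 :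
  i0 != i1 -> v 0 i0 != 0 -> v 0 i1 != 0 -> (2 <= wt v)%N.
Proof.
move=> ne h0 h1; rewrite /wt.
have <- : #|[set i0; i1]| = 2%N by rewrite cards2 ne.
apply: subset_leq_card; apply/subsetP => j; rewrite !inE => /orP [] /eqP ->; by [].
Qed.

Lemma wt_rshift (F : fieldType) (k N : nat) (v : 'rV[F]_N) :
  wt (row_mx (0 : 'rV[F]_k) v) = wt v.
Proof.
rewrite /wt.
have -> : [set j : 'I_(k + N) | row_mx (0 : 'rV[F]_k) v 0 j != 0] =
          @rshift k N @: [set j : 'I_N | v 0 j != 0].
  apply/setP => j; rewrite inE.
  rewrite -(splitK j); case: (split j) => i /=.
  - rewrite row_mxEl mxE eqxx /=; apply/esym/negbTE/imsetP => [[j' _]].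
    move=> h; have := congr1 (@nat_of_ord _) h => /= h2; have := ltn_ord i; lia.
  - rewrite row_mxEr; apply/idP/imsetP => [h | [j' hj' /rshift_inj ->]].
      by exists i; rewrite ?inE.
    by rewrite inE in hj'.
by rewrite card_imset //; exact: rshift_inj.
Qed.

Lemma mul_tr_entry (F : fieldType) (N m : nat) (u : 'rV[F]_N) (A : 'M[F]_(m, N)) i :
  (u *m A^T) 0 i = (u *m (row i A)^T) 0 0.
Proof. by rewrite !mxE; apply: eq_bigr => j _; rewrite !mxE. Qed.

Lemma dual_rows (F : finFieldType) (N m : nat) (C : {set 'rV[F]_N}) (A : 'M[F]_(m, N)) u :
  (forall i, row i A \in C) -> u \in dual C -> u *m A^T = 0.
Proof.
move=> hA; rewrite inE => /forallP hu.
apply/matrixP => i j; have := implyP (hu (row j A)) (hA j) => /eqP h.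
by rewrite ord1 mul_tr_entry h !mxE.
Qed.

Lemma ext_dual_lift (F : finFieldType) (k N : nat) (C : {set 'rV[F]_N}) (G : 'M[F]_(k, N)) v :
  (forall i, row i G \in C) -> v \in dual C ->
  row_mx (0 : 'rV[F]_k) v \in dual (ext_code G).
Proof.
move=> hG vC; rewrite inE; apply/forallP => w; apply/implyP.
rewrite inE /rowspace => /submxP [z ->].
by rewrite trmx_mul mulmxA tr_row_mx mul_row_col mul0mx add0r (dual_rows hG vC) mul0mx.
Qed.

Lemma ext_dual_wt (F : finFieldType) (k N : nat) (G : 'M[F]_(k.+1, N)) u :
  (forall j, G 0 j = 1) -> u \in dual (ext_code G) -> u != 0 -> (2 <= wt u)%N.
Proof.
move=> hG0 uD u0.
have hrows : forall i, row i (row_mx 1%:M G) \in ext_code G.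
  by move=> i; rewrite inE /rowspace row_sub.
have E0 := dual_rows hrows uD.
rewrite -(hsubmxK u) tr_row_mx mul_row_col trmx1 mulmx1 in E0.
set u1 := lsubmx u in E0; set u2 := rsubmx u in E0.
have hr : forall j, u 0 (rshift k.+1 j) = u2 0 j by move=> j; rewrite /u2 mxE.
have hl : forall j, u 0 (lshift N j) = u1 0 j by move=> j; rewrite /u1 mxE.
have e1 : u1 = - (u2 *m G^T) by apply/eqP; rewrite -addr_eq0 E0.
case: (pickP (fun j => u2 0 j != 0)) => [j hj | none]; last first.
  have u20 : u2 = 0.
    by apply/matrixP => i j; rewrite ord1 [RHS]mxE; have := none j => /= /negbFE /eqP.
  move: u0; rewrite -(hsubmxK u) -/u1 -/u2 e1 u20 mul0mx oppr0.
  by rewrite row_mx0 eqxx.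
have e10 : u1 0 0 = - \sum_j u2 0 j.
  rewrite e1 mxE; congr (- _); rewrite mxE; apply: eq_bigr => j' _.
  by rewrite [G^T _ _]mxE hG0 mulr1.
case: (eqVneq (u1 0 0) 0) => h10.
  move: h10; rewrite e10 => /eqP; rewrite oppr_eq0 => /eqP hs.
  case: (pickP (fun j' => (j' != j) && (u2 0 j' != 0))) => [j' /andP [nj hj'] | none].
    apply: (@wt_two _ _ u (rshift k.+1 j) (rshift k.+1 j')).
    - by apply/negP => /eqP /rshift_inj /eqP; rewrite eq_sym (negbTE nj).
    - by rewrite hr.
    - by rewrite hr.
  move: hs; rewrite (bigD1 j) //= big1 ?addr0 => [h|j' nj].
    by move: hj; rewrite h eqxx.
  by have := none j'; rewrite nj /= => /negbFE /eqP.
apply: (@wt_two _ _ u (lshift N 0) (rshift k.+1 j)).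
- by rewrite eq_lrshift.
- by rewrite hl.
- by rewrite hr.
Qed.


Lemma CD_so (p e : nat) (F L : finFieldType) (iota : {rmorphism F -> L}) (r : nat) (alpha : L) :
  p \in [char L] -> (2 < p ^ e)%N -> (2 <= r)%N ->
  #|L| = ((p ^ e) ^ (2 * r))%N ->
  alpha != 0 -> (forall x : L, x != 0 -> exists k : nat, x = alpha ^+ k) ->
  self_orthogonal (CDbar iota (p ^ e)%N r).
Proof.
move=> ch q2 r2 HL a0 gen.
set q := (p ^ e)%N in q2 HL *.
have r0 : (0 < r)%N by lia.
apply/subsetP => v; rewrite inE => /existsP [b /existsP [c /forallP hv]].
rewrite inE; apply/forallP => w; apply/implyP.
rewrite inE => /existsP [b' /existsP [c' /forallP hw]].
apply/eqP/matrixP => i j; rewrite !ord1 !mxE.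
apply: (fmorph_inj iota); rewrite rmorph0 rmorph_sum /=.
under eq_bigr => k _ do rewrite mxE rmorphM (eqP (hv k)) (eqP (hw k)).
set f := fun x => (trq q (2 * r) (b * x) + iota c) * (trq q (2 * r) (b' * x) + iota c').
have E : \sum_(k < #|Dset L q r|) f (enum_val k) = \sum_(x in Dset L q r) f x.
  by symmetry; apply: big_enum_val.
rewrite /dpt -/(f _) E /f.
under eq_bigr => x _ do rewrite mulrDl !mulrDr.
rewrite !big_split /= (sum_tr2 (alpha:=alpha)) // -mulr_suml (sum_tr1 (alpha:=alpha)) // -mulr_sumr (sum_tr1 (alpha:=alpha)) //.
rewrite sumr_const -mulr_natr (card_D (p:=p) (e:=e) (alpha:=alpha)) //.
by rewrite mul0r mulr0 mulr0 !add0r.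
Qed.

Lemma rowsG (q : nat) (F L : finFieldType) (iota : {rmorphism F -> L}) (r : nat) (alpha : L)
  (G1 : 'M[F]_((2 * r)%N.+1, #|Dset L q r|)) :
  (0 < q)%N -> (forall i j, iota (G1 i j) = G1entry q r alpha i j) ->
  forall i, row i G1 \in CDbar iota q r.
Proof.
move=> q0 HG i.
have [b [c hk]] : exists b c, forall j, G1entry q r alpha i j =
    trq q (2 * r) (b * dpt j) + iota c.
  rewrite /G1entry; case: eqP => [_|h0].
    by exists 0, 1 => j; rewrite mul0r trq0 // add0r rmorph1.
  case: eqP => [_|h1].
    by exists 1, 0 => j; rewrite mul1r rmorph0 addr0.
  case: eqP => [_|h2].
    by exists alpha, 1 => j; rewrite rmorph1.
  by exists (alpha ^+ i.-1), 0 => j; rewrite rmorph0 addr0.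
rewrite inE; apply/existsP; exists b; apply/existsP; exists c.
by apply/forallP => j; rewrite mxE HG hk.
Qed.

Lemma small_dual (p e : nat) (F L : finFieldType) (iota : {rmorphism F -> L}) (r : nat) (alpha : L) :
  p \in [char L] -> (2 < p ^ e)%N -> #|F| = (p ^ e)%N -> (2 <= r)%N ->
  #|L| = ((p ^ e) ^ (2 * r))%N ->
  alpha != 0 -> (forall x : L, x != 0 -> exists k : nat, x = alpha ^+ k) ->
  exists2 v0, v0 \in dual (CDbar iota (p ^ e)%N r) & (v0 != 0) && (wt v0 <= 3)%N.
Proof.
move=> ch q2 HF r2 HL a0 gen.
set q := (p ^ e)%N in q2 HF HL *.
have q0 : (0 < q)%N by lia.
set D := Dset L q r.
have D0 : (0 : L) \in D.
  by rewrite inE expr0n addn1 /= trq0.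
have [x xD x0] : exists2 x, x \in D & x != 0.
  case: (pickP (fun x => (x \in D) && (x != 0))) => [x /andP [h1 h2] | none].
    by exists x.
  have : #|D| = 1%N.
    apply/eqP; rewrite eqn_leq; apply/andP; split; last by apply/card_gt0P; exists 0.
    rewrite -(cards1 (0 : L)); apply: subset_leq_card; apply/subsetP => y yD.
    by rewrite inE; have := none y; rewrite yD /= => /negbFE.
  have := card_D (p:=p) (e:=e) (alpha:=alpha) ch (erefl _) q2 r2 HL a0 gen.
  by rewrite -/D => + hD; rewrite hD => /eqP; rewrite oner_eq0.
have [a a0' a1] : exists2 a : F, a != 0 & a != 1.
  case: (pickP (fun a : F => (a != 0) && (a != 1))) => [a /andP [h1 h2] | none].
    by exists a.
  have : (#|F| <= 2)%N.
    rewrite -cardsT; apply: (@leq_trans #|[set (0 : F); 1]|).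
      apply: subset_leq_card; apply/subsetP => y _; rewrite !inE.
      by have := none y => /= /negbT; rewrite negb_and !negbK.
    by rewrite cards2; case: (_ != _).
  by rewrite HF; lia.
set lam := iota a.
have lamq : lam ^+ q = lam by rewrite /lam -rmorphXn -HF expf_card.
have lam0 : lam != 0 by rewrite fmorph_eq0.
have lam1 : lam != 1 by rewrite fmorph_eq1.
have lxD : lam * x \in D.
  move: xD; rewrite !inE (Q_scale _ (erefl _) (_ : _ ^+ q = _)) => [/eqP -> |].
    by rewrite mulr0.
  by rewrite -!exprM mulnC exprM lamq.
have lx0 : lam * x != 0 by rewrite mulf_neq0.
have lxx : lam * x != x.
  by apply/negP => /eqP h; move: lam1; rewrite -(mulIf x0 (etrans h (esym (mul1r x)))) eqxx.
set j0 := enum_rank_in D0 0.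
set j1 := enum_rank_in D0 x.
set j2 := enum_rank_in D0 (lam * x).
have ej0 : dpt j0 = 0 by rewrite /dpt enum_rankK_in.
have ej1 : dpt j1 = x by rewrite /dpt enum_rankK_in.
have ej2 : dpt j2 = lam * x by rewrite /dpt enum_rankK_in.
have n01 : j0 != j1 by apply/negP => /eqP h; move: x0; rewrite -ej1 -h ej0 eqxx.
have n02 : j0 != j2 by apply/negP => /eqP h; move: lx0; rewrite -ej2 -h ej0 eqxx.
have n12 : j1 != j2 by apply/negP => /eqP h; move: lxx; rewrite -ej2 -h ej1 eqxx.
set v0 : 'rV[F]_#|D| := (a - 1) *: delta_mx 0 j0 + (- a) *: delta_mx 0 j1 + delta_mx 0 j2.
have v0E : forall j, v0 0 j = (a - 1) * (j == j0)%:R + (- a) * (j == j1)%:R + (j == j2)%:R.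
  by move=> j; rewrite !mxE.
exists v0.
  rewrite inE; apply/forallP => w; apply/implyP; rewrite inE.
  move=> /existsP [b /existsP [c /forallP hw]].
  rewrite /v0 !mulmxDl -!scalemxAl -!rowE.
  apply/eqP/matrixP => i k; rewrite !ord1 !mxE.
  apply: (fmorph_inj iota); rewrite rmorph0 !rmorphD !rmorphM rmorphN rmorphB rmorph1.
  rewrite (eqP (hw j0)) (eqP (hw j1)) (eqP (hw j2)) ej0 ej1 ej2 mulr0 trq0 //.
  rewrite [b * (lam * x)]mulrCA (@trq_scale _ q (2 * r) lam (b * x) lamq) /lam.
  ring.
apply/andP; split.
  apply/negP => /eqP h; have := congr1 (fun M : 'rV[F]_#|D| => M 0 j2) h.
  rewrite /= v0E mxE eqxx [j2 == j0]eq_sym [j2 == j1]eq_sym (negbTE n02) (negbTE n12).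
  by rewrite !mulr0 !add0r => /eqP; rewrite oner_eq0.
rewrite /wt; apply: (@leq_trans #|[:: j0; j1; j2]|); last exact: card_size.
  apply: subset_leq_card; apply/subsetP => j; rewrite !inE v0E.
  by case: (j == j0); case: (j == j1); case: (j == j2); rewrite //= !mulr0 !addr0 eqxx.
Qed.


Unset Implicit Arguments. Set Strict Implicit. Set Printing Implicit Defensive.

Theorem theorem3p14
  (p e : nat) (F L : finFieldType) (iota : {rmorphism F -> L}) (r : nat)
  (alpha : L) (G1 : 'M[F]_((2 * r)%N.+1, #|Dset L (p ^ e)%N r|)) :
  prime p -> (2 < p ^ e)%N -> #|F| = (p ^ e)%N -> (2 <= r)%N ->
  #|L| = ((p ^ e) ^ (2 * r))%N ->
  alpha != 0 -> (forall x : L, x != 0 -> exists k : nat, x = alpha ^+ k) ->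
  (forall i j, iota (G1 i j) = G1entry (p ^ e)%N r alpha i j) ->
  self_orthogonal (CDbar iota (p ^ e)%N r) /\
  (almost_optimally_extendable (CDbar iota (p ^ e)%N r) G1 \/
   optimally_extendable (CDbar iota (p ^ e)%N r) G1).
Proof.
move=> pp q2 HF r2 HL a0 gen HG.
have ch : p \in [char L].
  by apply: (@card_finPcharP _ p (e * (2 * r))) => //; rewrite HL -expnM.
split; first exact: (CD_so iota ch q2 r2 HL a0 gen).
have q0 : (0 < p ^ e)%N by lia.
have hrows := rowsG q0 HG.
have [v0 v0D /andP [v0nz v0w]] := small_dual iota ch q2 HF r2 HL a0 gen.
have hG0 : forall j, G1 0 j = 1.
  by move=> j; apply: (fmorph_inj iota); rewrite HG rmorph1.
set C := CDbar iota (p ^ e)%N r in hrows v0D *.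
have liftnz : forall v : 'rV[F]_#|Dset L (p ^ e)%N r|, v != 0 ->
    row_mx (0 : 'rV[F]_(2 * r).+1) v != 0.
  move=> v vnz; apply/negP => /eqP h; move: h; rewrite -row_mx0 => /eq_row_mx [_ h].
  by move: vnz; rewrite h eqxx.
have hb3 : (dmin (dual C) <= 3)%N := leq_trans (dmin_le v0D v0nz) v0w.
have ha2 : (2 <= dmin (dual (ext_code G1)))%N.
  apply: dmin_ge; first by move=> u uD u0; exact: ext_dual_wt hG0 uD u0.
  lia.
have hab : (dmin (dual (ext_code G1)) <= dmin (dual C))%N.
  apply: dmin_ge.
    move=> v vD vnz; rewrite -(wt_rshift (2 * r).+1).
    exact: dmin_le (ext_dual_lift hrows vD) (liftnz v vnz).
  apply: leq_trans (dmin_le (ext_dual_lift hrows v0D) (liftnz v0 v0nz)) _.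
  by rewrite wt_rshift wt_le.
rewrite /almost_optimally_extendable /optimally_extendable.
lia.
Qed.
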